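(* For every $N\ge 2$, $\mathbb{E}[\mathcal{N}_1(N)]=N/2$, and for every $N\ge 3$, $$\mathbb{E}[\mathcal{N}_1(N)^2]=\frac{N(3N+1)}{12},\qquad \operatorname{Var}[\mathcal{N}_1(N)]=\frac{N}{12}.$$
   Context: A random recursive hypergraph (RRH) is the random hypergraph process defined as follows. At size $N=1$ it has vertex set $\{v_1\}$ and edge set $\{\{v_1\}\}$. Given the hypergraph of size $N$ (vertices $v_1,\dots,v_N$, exactly $N$ edges), one chooses an existing edge $e$ uniformly at random, independently of the past, and adds a new vertex $v_{N+1}$ together with the new edge $e\cup\{v_{N+1}\}$. The degree of a vertex is the number of edges containing it. $\mathcal{N}_k(N)$ denotes the number of vertices of degree $k$ in the RRH of size $N$. *)

(* Defs.v *)
From mathcomp Require Import all_boot all_order all_algebra.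
Set Implicit Arguments. Unset Strict Implicit. Unset Printing Implicit Defensive.
Import Order.TTheory GRing.Theory Num.Theory.

(* A hypergraph of size N: vertices v_1..v_N are encoded as 0..N-1, and the
   hypergraph is its list of N edges (each edge a list of vertices). *)
Definition hgraph := seq (seq nat).

Definition rrh_step (H : hgraph) (i : nat) : hgraph :=
  rcons H (rcons (nth [::] H i) (size H)).

(* The RRH obtained from a sequence of edge choices, starting from size 1:
   vertex set {v_1}, edge set {{v_1}}. *)
Definition rrh (s : seq nat) : hgraph := foldl rrh_step [:: [:: 0%N]] s.

(* Since the choices are independent and uniform, the law of the RRH of size
   n.+1 is the uniform distribution on these sequences. *)
Fixpoint rrh_choices (n : nat) : seq (seq nat) :=
  if n is n'.+1 then
    [seq rcons s i | s <- rrh_choices n', i <- iota 0 n'.+1]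
  else [:: [::]].

Local Open Scope ring_scope.
Definition rrh_E (N : nat) (f : hgraph -> rat) : rat :=
  (\sum_(s <- rrh_choices N.-1) f (rrh s)) / (size (rrh_choices N.-1))%:R.

Definition rrh_Var (N : nat) (f : hgraph -> rat) : rat :=
  rrh_E N (fun H => (f H - rrh_E N f) ^+ 2).

Definition degree (H : hgraph) (v : nat) : nat := count (fun e => v \in e) H.

Definition Nk (k : nat) (H : hgraph) : nat :=
  count (fun v => degree H v == k) (iota 0 (size H)).

(* Main.v *)
Require Import Defs.
From mathcomp Require Import all_boot all_order all_algebra.
From mathcomp Require Import ring lra.
Import Order.TTheory GRing.Theory Num.Theory.
Set Implicit Arguments. Unset Strict Implicit.

Definition rinv (H : hgraph) := forall j, (j < size H)%N ->
  all (fun v => (v < size H)%N) (nth [::] H j) && (j \in nth [::] H j).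

Lemma size_rrh s : size (rrh s) = (size s).+1.
Proof.
elim/last_ind: s => [//|s x IH].
by rewrite /rrh foldl_rcons -/(rrh s) /rrh_step !size_rcons IH.
Qed.

Lemma inv_rrh s : rinv (rrh s).
Proof.
elim/last_ind: s => [|s x IH].
  by move=> j; rewrite /= ltnS leqn0 => /eqP ->.
rewrite /rrh foldl_rcons -/(rrh s) /rrh_step.
set H := rrh s; move: IH; rewrite -/H => IH j.
rewrite size_rcons ltnS nth_rcons leq_eqVlt.
case: (ltnP j (size H)) => hj.
  move=> _; case/andP: (IH j hj) => /allP ha ->; rewrite andbT.
  by apply/allP => v /ha /ltnW; rewrite ltnS.
rewrite orbF => /eqP ->; rewrite eqxx mem_rcons mem_head andbT.
apply/allP => v; rewrite mem_rcons in_cons => /orP [/eqP -> //|].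
case: (ltnP x (size H)) => hx.
  by case/andP: (IH x hx) => /allP ha _ /ha /ltnW; rewrite ltnS.
by rewrite nth_default.
Qed.

Lemma cnt1 (P : pred nat) s i : uniq s -> i \in s ->
  (count (fun v => P v && (v != i)) s + P i = count P s)%N.
Proof.
elim: s => [//|x s IH] /= /andP [hx hu]; rewrite in_cons.
case: (eqVneq i x) => [ei _|hne /= hi]; first subst x.
  rewrite andbF add0n addnC; congr (_ + _)%N.
  apply: eq_in_count => v hv; case: (eqVneq v i) => [e|]; last by rewrite andbT.
  by rewrite -e hv in hx.
by rewrite andbT -IH // addnA.
Qed.

Lemma degree_step H i v : degree (rrh_step H i) v =
  (degree H v + (v \in rcons (nth [::] H i) (size H)))%N.
Proof. by rewrite /degree /rrh_step -cats1 count_cat /= addn0. Qed.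

Lemma deg_ge1 H v : rinv H -> (v < size H)%N -> (0 < degree H v)%N.
Proof.
move=> hI hv; rewrite /degree -has_count; apply/hasP.
exists (nth [::] H v); first exact: mem_nth.
by case/andP: (hI v hv).
Qed.

Lemma count_nth (a : pred (seq nat)) (H : hgraph) :
  count a H = count (fun j => a (nth [::] H j)) (iota 0 (size H)).
Proof.
by rewrite -{1}(mkseq_nth [::] H) /mkseq count_map.
Qed.

Lemma deg_ge2 H v i : rinv H -> (v < size H)%N -> (i < size H)%N -> v != i ->
  v \in nth [::] H i -> (1 < degree H v)%N.
Proof.
move=> hI hv hi hne hvi; rewrite /degree count_nth.
rewrite -(@cnt1 _ _ i) ?iota_uniq ?mem_iota //= hvi addn1 ltnS -has_count.
apply/hasP; exists v; first by rewrite mem_iota.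
by rewrite hne andbT; case/andP: (hI v hv).
Qed.

Lemma step_L H i : rinv H -> (i < size H)%N ->
  (Nk 1 (rrh_step H i) + (degree H i == 1%N) = Nk 1 H + 1)%N.
Proof.
move=> hI hi; rewrite /Nk.
have -> : size (rrh_step H i) = (size H).+1 by rewrite /rrh_step size_rcons.
rewrite -[(size H).+1]addn1 iotaD count_cat /= degree_step mem_rcons mem_head.
have -> : degree H (size H) = 0%N.
  rewrite /degree count_nth; apply/eqP; rewrite -leqn0 leqNgt -has_count.
  apply/hasP => -[j]; rewrite mem_iota /= => hj.
  by case/andP: (hI j hj) => /allP ha _ /ha; rewrite ltnn.
rewrite /= addn0 -addnA (addnC 1%N) addnA; congr (_ + _)%N.
rewrite -[RHS](@cnt1 _ _ i) ?iota_uniq ?mem_iota //; congr (_ + _)%N.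
apply: eq_in_count => v; rewrite mem_iota add0n => /andP [_ hv].
rewrite degree_step mem_rcons in_cons.
have -> : (v == size H) = false by rewrite ltn_eqF.
rewrite /=.
case: (eqVneq v i) => [->|hne].
  case/andP: (hI i hi) => _ ->; rewrite addn1 eqSS.
  by rewrite andbF; have := deg_ge1 hI hi; case: (degree H i).
case hvi: (v \in nth [::] H i); last by rewrite addn0 andbT.
have := deg_ge2 hI hv hi hne hvi.
by rewrite addn1 eqSS andbT; case: (degree H v) => [|[|]].
Qed.
Local Open Scope ring_scope.

Definition X (H : hgraph) : rat := (Nk 1 H)%:R.
Definition bb (H : hgraph) (i : nat) : rat := (degree H i == 1%N)%:R.

Lemma sum_const_seq (T : Type) (s : seq T) (c : rat) : \sum_(x <- s) c = c * (size s)%:R.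
Proof.
elim: s => [|x s IH]; first by rewrite big_nil mulr0.
by rewrite big_cons IH /= -addn1 natrD; ring.
Qed.

Lemma sum_count (s : seq nat) (P : pred nat) :
  \sum_(x <- s) ((P x)%:R : rat) = (count P s)%:R.
Proof.
elim: s => [|x s IH]; first by rewrite big_nil.
by rewrite big_cons IH /= natrD.
Qed.

Lemma X_step H i : rinv H -> (i < size H)%N -> X (rrh_step H i) = X H + 1 - bb H i.
Proof.
move=> hI hi; have := step_L hI hi; rewrite /X /bb => /(congr1 (fun n => n%:R : rat)).
rewrite !natrD => e; rewrite -e; ring.
Qed.

Lemma sum_bb H : \sum_(i <- iota 0 (size H)) bb H i = X H.
Proof. by rewrite /bb (sum_count _ (fun i => degree H i == 1%N)). Qed.

Lemma bb2 H i : bb H i ^+ 2 = bb H i.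
Proof. by rewrite /bb; case: (_ == _); rewrite ?expr0n ?expr1n. Qed.

Lemma inner1 H : rinv H ->
  \sum_(i <- iota 0 (size H)) X (rrh_step H i) = (size H)%:R * (X H + 1) - X H.
Proof.
move=> hI; rewrite (eq_big_seq (fun i => X H + 1 - bb H i)); last first.
  by move=> i; rewrite mem_iota add0n => /andP [_ hi]; rewrite X_step.
rewrite sumrB sum_bb sum_const_seq size_iota; ring.
Qed.

Lemma inner2 H : rinv H ->
  \sum_(i <- iota 0 (size H)) X (rrh_step H i) ^+ 2 =
  (size H)%:R * (X H + 1) ^+ 2 - 2 * (X H + 1) * X H + X H.
Proof.
move=> hI; rewrite (eq_big_seq (fun i => (X H + 1) ^+ 2 - (2 * (X H + 1)) * bb H i + bb H i)); last first.
  move=> i; rewrite mem_iota add0n => /andP [_ hi]; rewrite X_step //.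
  rewrite -[X in _ = _ + X](bb2 H i); ring.
rewrite big_split sumrB /= sum_const_seq -mulr_sumr sum_bb size_iota; ring.
Qed.
Local Open Scope ring_scope.

Definition A1 m := \sum_(s <- rrh_choices m) X (rrh s).
Definition A2 m := \sum_(s <- rrh_choices m) X (rrh s) ^+ 2.
Definition cc m : rat := (size (rrh_choices m))%:R.

Lemma lin (T : Type) (r : seq T) (g : T -> rat) a b d :
  \sum_(s <- r) (a * g s ^+ 2 + b * g s + d) =
  a * \sum_(s <- r) g s ^+ 2 + b * \sum_(s <- r) g s + d * (size r)%:R.
Proof. by rewrite !big_split /= -!mulr_sumr sum_const_seq. Qed.

Lemma mem_choices m s : s \in rrh_choices m -> size s = m.
Proof.
elim: m s => [|m IH] s; first by rewrite inE => /eqP ->.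
case/allpairsPdep => [s' [i [hs _ ->]]]; by rewrite size_rcons (IH _ hs).
Qed.

Lemma outer m (F : hgraph -> rat) :
  \sum_(s <- rrh_choices m.+1) F (rrh s) =
  \sum_(s <- rrh_choices m) \sum_(i <- iota 0 (size (rrh s))) F (rrh_step (rrh s) i).
Proof.
rewrite big_allpairs_dep big_seq [RHS]big_seq; apply: eq_bigr => s hs.
rewrite size_rrh (mem_choices hs); apply: eq_bigr => i _.
by rewrite /rrh foldl_rcons.
Qed.

Lemma cc_S m : cc m.+1 = cc m * m.+1%:R.
Proof. by rewrite /cc size_allpairs size_iota natrM. Qed.

Lemma A1_S m : A1 m.+1 = m.+1%:R * (A1 m + cc m) - A1 m.
Proof.
rewrite /A1 outer.
rewrite (eq_big_seq (fun s => 0 * X (rrh s) ^+ 2 + (m.+1%:R - 1) * X (rrh s) + m.+1%:R)); last first.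
  move=> s /= hs; rewrite inner1; last exact: inv_rrh.
  rewrite size_rrh (mem_choices hs); ring.
rewrite lin -/(cc m); ring.
Qed.

Lemma A2_S m : A2 m.+1 = m.+1%:R * (A2 m + 2 * A1 m + cc m) - 2 * A2 m - A1 m.
Proof.
rewrite /A2 (outer m (fun H => X H ^+ 2)).
rewrite (eq_big_seq (fun s => (m.+1%:R - 2) * X (rrh s) ^+ 2 + (2 * m.+1%:R - 1) * X (rrh s) + m.+1%:R)); last first.
  move=> s /= hs; rewrite inner2; last exact: inv_rrh.
  rewrite size_rrh (mem_choices hs); ring.
rewrite lin -/(cc m) -/(A1 m); ring.
Qed.
Local Open Scope ring_scope.

Lemma base0 : [/\ A1 0 = 1, A2 0 = 1 & cc 0 = 1].
Proof. by rewrite /A1 /A2 /cc /= !big_cons !big_nil /X /Nk /degree /=. Qed.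

Lemma cc_gt0 m : 0 < cc m.
Proof.
elim: m => [|m IH]; first by case: base0 => _ _ ->.
by rewrite cc_S mulr_gt0 // ltr0n.
Qed.

Lemma A1_val m : (1 <= m)%N -> A1 m = (m.+1%:R / 2) * cc m.
Proof.
elim: m => [//|m IH] _; rewrite A1_S cc_S.
case: m IH => [|m] IH.
  by case: base0 => -> _ ->; rewrite /=; by field.
rewrite IH //; by field.
Qed.

Lemma A2_val m : (2 <= m)%N -> A2 m = (m.+1%:R * (3 * m.+1%:R + 1) / 12) * cc m.
Proof.
elim: m => [//|m IH] hm; rewrite A2_S cc_S A1_val //.
case: m IH hm => [//|[|m]] IH _.
  rewrite A2_S cc_S; case: base0 => -> -> ->; rewrite /=; by field.
have e3 : m.+3%:R = m%:R + 3 :> rat by rewrite -addn3 natrD.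
have e4 : m.+4%:R = m%:R + 4 :> rat by rewrite -addn4 natrD.
rewrite IH // e3 e4; by field.
Qed.
Local Open Scope ring_scope.

Theorem mainTheorem2 :
  (forall N : nat, (2 <= N)%N ->
     rrh_E N (fun H => (Nk 1 H)%:R) = N%:R / 2) /\
  (forall N : nat, (3 <= N)%N ->
     rrh_E N (fun H => ((Nk 1 H)%:R) ^+ 2) = N%:R * (3 * N%:R + 1) / 12 /\
     rrh_Var N (fun H => (Nk 1 H)%:R) = N%:R / 12).
Proof.
have E1 m : (1 <= m)%N -> rrh_E m.+1 (fun H => (Nk 1 H)%:R) = m.+1%:R / 2.
  move=> hm; rewrite /rrh_E /= -/(cc m).
  have -> : \sum_(s <- rrh_choices m) ((Nk 1 (rrh s))%:R : rat) = A1 m by [].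
  have := cc_gt0 m; rewrite A1_val // => h; field; lra.
split.
  by case=> [//|m] hm; apply: E1.
case=> [//|m] hm; split.
  rewrite /rrh_E /= -/(cc m).
  have -> : \sum_(s <- rrh_choices m) ((Nk 1 (rrh s))%:R ^+ 2 : rat) = A2 m by [].
  have := cc_gt0 m; rewrite A2_val // => h; field; lra.
rewrite /rrh_Var E1; last exact: (@ltnW 1 m hm).
rewrite /rrh_E /= -/(cc m).
rewrite (eq_bigr (fun s => 1 * X (rrh s) ^+ 2 + (- (2 * (m.+1%:R / 2))) * X (rrh s) + (m.+1%:R / 2) ^+ 2)); last first.
  move=> s _; rewrite /X; ring.
have h1 : (1 <= m)%N by exact: (@ltnW 1 m hm).
rewrite lin -/(cc m) -/(A1 m) -/(A2 m) A1_val // A2_val //.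
have := cc_gt0 m => h; field; lra.
Qed.
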